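(* Let $G$ be a connected graph containing $t'$ pairwise vertex-disjoint triangles. Then $rc(L(G))\leq n_2-t'$, where $n_2$ is the number of vertices of $G$ of degree at least $2$. Moreover, the bound is sharp: for every positive integer $t'$ there exists a connected graph $G$ with $t'$ pairwise vertex-disjoint triangles such that $rc(L(G))=n_2-t'$.
   Context: All graphs are simple, finite and undirected. $L(G)$ is the line graph of $G$. For an edge-colouring of a graph (adjacent edges may receive the same colour), a path is rainbow if no two of its edges have the same colour; the graph is rainbow connected if every two vertices are joined by a rainbow path. The rainbow connection number $rc(H)$ of a connected graph $H$ is the smallest number of colours in an edge-colouring making $H$ rainbow connected. *)

(* Defs.v *)
From Stdlib Require Import ClassicalEpsilon.
From mathcomp Require Import all_boot.
Set Implicit Arguments. Unset Strict Implicit. Unset Printing Implicit Defensive.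

(* A simple graph is a symmetric irreflexive relation [e] on a finType [T]. *)

Definition connected_graph (T : finType) (e : rel T) : Prop :=
  forall x y : T, connect e x y.

Definition is_edge (T : finType) (e : rel T) (A : {set T}) : bool :=
  [exists x, exists y, e x y && (A == [set x; y])].

Definition line_vertex (T : finType) (e : rel T) : finType :=
  {A : {set T} | is_edge e A}.

Definition line_adj (T : finType) (e : rel T) : rel (line_vertex e) :=
  fun A B => (A != B) && (val A :&: val B != set0).
Arguments line_adj {T} e.

(* An edge-colouring of a graph (V, adj) with (at most) k colours:
   c u v is the colour of the edge uv; it must be symmetric and < k on edges.
   (Its values on non-edges are irrelevant.) *)
Definition edge_colouring (V : finType) (adj : rel V) (k : nat)
  (c : V -> V -> nat) : Prop :=
  forall u v, adj u v -> c u v < k /\ c u v = c v u.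

Definition rainbow_path (V : finType) (adj : rel V) (c : V -> V -> nat)
  (x y : V) (p : seq V) : Prop :=
  [/\ path adj x p, last x p = y, uniq (x :: p) & uniq (pairmap c x p)].

Definition rainbow_connected (V : finType) (adj : rel V) (c : V -> V -> nat)
  : Prop := forall x y : V, exists p, rainbow_path adj c x y p.

Definition rc_with (V : finType) (adj : rel V) (k : nat) : Prop :=
  exists c, edge_colouring adj k c /\ rainbow_connected adj c.

Definition rc_withb (V : finType) (adj : rel V) (k : nat) : bool :=
  if excluded_middle_informative (rc_with adj k) then true else false.

(* Rainbow connection number: least k with rc_with adj k
   (defined as 0 if no such k exists, i.e. for disconnected graphs). *)
Definition rc (V : finType) (adj : rel V) : nat :=
  match excluded_middle_informative (exists k, rc_withb adj k) with
  | left H => ex_minn H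
  | right _ => 0
  end.

Definition n2 (T : finType) (e : rel T) : nat :=
  #|[set v : T | 2 <= #|[set u : T | e v u]|]|.

Definition is_triangle (T : finType) (e : rel T) (A : {set T}) : Prop :=
  #|A| = 3 /\ {in A &, forall x y, x != y -> e x y}.

Definition disjoint_triangles (T : finType) (e : rel T) (t : nat)
  (tr : 'I_t -> {set T}) : Prop :=
  (forall i, is_triangle e (tr i)) /\
  (forall i j, i != j -> [disjoint tr i & tr j]).

(* Main.v *)
Require Import Defs.
From Stdlib Require Import Classical ClassicalEpsilon.
From mathcomp Require Import all_boot zify.
Set Implicit Arguments. Unset Strict Implicit. Unset Printing Implicit Defensive.

Section Basic.
Variables (T : finType) (e : rel T).
Hypotheses (esym : symmetric e) (eirr : irreflexive e).

Notation L := (line_vertex e).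
Notation ladj := (line_adj e).

Lemma edgeP (A : L) : exists x y, [/\ e x y, x != y & val A = [set x; y]].
Proof.
case: A => A /= /existsP [x /existsP [y /andP [hxy /eqP ->]]].
exists x, y; split => //; apply/eqP => exy; by rewrite exy eirr in hxy.
Qed.

Lemma card_edge (A : L) : #|val A| = 2.
Proof. by have [x [y [_ nxy ->]]] := edgeP A; rewrite cards2 nxy. Qed.

Lemma edge2 (A : L) a b : a \in val A -> b \in val A -> a != b -> val A = [set a; b].
Proof.
move=> ha hb nab; apply/eqP; rewrite eq_sym eqEcard card_edge cards2 nab andbT.
by apply/subsetP => z; rewrite !inE => /orP [] /eqP ->.
Qed.

Lemma edge_adj (A : L) a b : a \in val A -> b \in val A -> a != b -> e a b.
Proof.
move=> ha hb nab; have [x [y [hxy nxy eA]]] := edgeP A.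
move: ha hb nab; rewrite eA !inE => /orP [] /eqP -> /orP [] /eqP ->; rewrite ?eqxx //.
by rewrite esym.
Qed.

Lemma share1 (A B : L) a b : A != B -> a \in val A -> a \in val B ->
  b \in val A -> b \in val B -> a = b.
Proof.
move=> nAB haA haB hbA hbB; apply/eqP; apply: contraNT nAB => nab.
by apply/eqP; apply: val_inj; rewrite (edge2 haA hbA nab) (edge2 haB hbB nab).
Qed.

Definition mkL x y (h : e x y) : L :=
  exist _ [set x; y] (introT existsP (ex_intro _ x (introT existsP (ex_intro _ y (introT andP (conj h (eqxx _))))))).

Lemma val_mkL x y h : val (@mkL x y h) = [set x; y].
Proof. by []. Qed.

Lemma ladjP (A B : L) : reflect (A != B /\ exists x, x \in val A /\ x \in val B) (ladj A B).
Proof.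
rewrite /line_adj; apply: (iffP andP) => [[-> /set0Pn [x]]|[-> [x [h1 h2]]]].
  by rewrite inE => /andP [h1 h2]; split => //; exists x.
by split => //; apply/set0Pn; exists x; rewrite inE h1.
Qed.

Lemma ladj_sym : symmetric ladj.
Proof. by move=> A B; rewrite /line_adj eq_sym setIC. Qed.


Definition walk (E F : L) k (X : nat -> L) :=
  [/\ X 0 = E, X k = F & forall i, i < k -> ladj (X i) (X i.+1)].

Lemma walk_exists_aux (s : seq T) x : path e x s -> forall E F : L,
  x \in val E -> last x s \in val F -> exists k X, walk E F k X.
Proof.
elim: s x => [|y s IH] x /=.
  move=> _ E F hE hF; case: (eqVneq E F) => [<-|nEF].
    by exists 0, (fun _ => E).
  exists 1, (fun i => if i == 0 then E else F); split => // i; rewrite ltnS leqn0 => /eqP -> /=.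
  by apply/ladjP; split => //; exists x.
move=> /andP [hxy hp] E F hE hF.
have hy : y \in val (mkL hxy) by rewrite val_mkL !inE eqxx orbT.
have [k [X [X0 Xk Xa]]] := IH y hp (mkL hxy) F hy hF.
case: (eqVneq E (mkL hxy)) => [->|nE]; first by exists k, X.
exists k.+1, (fun i => if i == 0 then E else X i.-1); split => //.
case => [_|i]; last by rewrite ltnS => /Xa.
by apply/ladjP; split; rewrite X0 //; exists x; rewrite val_mkL !inE eqxx.
Qed.

Lemma walk_exists : connected_graph e -> forall E F : L, exists k X, walk E F k X.
Proof.
move=> conn E F; have [x [y [hxy _ eE]]] := edgeP E.
have [u [v [huv _ eF]]] := edgeP F.
have /connectP [p hp lp] := conn x u.
by apply: (walk_exists_aux hp); rewrite ?eE ?eF -?lp !inE eqxx.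
Qed.

Definition cutf (X Y : nat -> L) a l b i :=
  if i <= a then X i else if i <= a + l then Y (i - a) else X (i - (a + l) + b).

Lemma walk_cut E F k X a b l Y : walk E F k X -> a <= b -> b <= k ->
  walk (X a) (X b) l Y ->
  walk E F (a + l + (k - b)) (cutf X Y a l b).
Proof.
move=> [X0 Xk Xa] hab hbk [Y0 Yl Ya].
have Zmid i : a <= i <= a + l -> cutf X Y a l b i = Y (i - a).
  rewrite /cutf; move=> /andP [h1 h2]; case: ifP => h3; last by rewrite h2.
  have -> : i = a by lia.
  by rewrite subnn Y0.
have Zhi i : a + l <= i -> cutf X Y a l b i = X (i - (a + l) + b).
  rewrite /cutf; move=> h1; case: ifP => h3.
    have ha : i = a by lia. have hl : l = 0 by lia.
    by rewrite ha hl addn0 subnn add0n -Yl hl Y0.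
  case: ifP => h4 //; have -> : i = a + l by lia.
  by rewrite subnn add0n -Yl; congr Y; lia.
split.
- by rewrite /cutf leq0n.
- rewrite Zhi; last by lia.
  by have -> : a + l + (k - b) - (a + l) + b = k by lia.
- move=> i hi.
  case: (leqP i.+1 a) => h1.
    by rewrite /cutf h1 (ltnW h1); apply: Xa; lia.
  case: (leqP i.+1 (a + l)) => h2.
    rewrite Zmid; last by lia. rewrite Zmid; last by lia.
    have -> : i.+1 - a = (i - a).+1 by lia.
    by apply: Ya; lia.
  rewrite Zhi; last by lia. rewrite Zhi; last by lia.
  have -> : i.+1 - (a + l) + b = (i - (a + l) + b).+1 by lia.
  by apply: Xa; lia.
Qed.

Definition short E F k X := walk E F k X /\ forall k' X', walk E F k' X' -> k <= k'.

Lemma short_cut E F k X a b l Y : short E F k X -> a <= b -> b <= k ->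
  walk (X a) (X b) l Y -> b - a <= l.
Proof.
move=> [hw hmin] hab hbk hY; have := hmin _ _ (walk_cut hw hab hbk hY); lia.
Qed.

Lemma short_neq E F k X a b : short E F k X -> a < b -> b <= k -> X a != X b.
Proof.
move=> hs hab hbk; apply/eqP => eab.
have : b - a <= 0.
  apply: (short_cut (l := 0) (Y := fun _ => X a) hs _ hbk); first lia.
  by split => //.
lia.
Qed.

Lemma short_nadj E F k X a b : short E F k X -> a.+2 <= b -> b <= k -> ~~ ladj (X a) (X b).
Proof.
move=> hs hab hbk; apply/negP => hadj.
have : b - a <= 1.
  apply: (short_cut (l := 1) (Y := fun i => if i == 0 then X a else X b) hs _ hbk); first lia.
  by split => // -[|i] //= _.
lia.
Qed.

Lemma short_nadj2 E F k X a b (B : L) : short E F k X -> a.+3 <= b -> b <= k ->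
  ladj (X a) B -> ladj B (X b) -> False.
Proof.
move=> hs hab hbk h1 h2.
have : b - a <= 2.
  apply: (short_cut (l := 2) (Y := fun i => if i == 0 then X a else if i == 1 then B else X b) hs _ hbk); first lia.
  by split => // -[|[|i]] //= _.
lia.
Qed.

Lemma short_disj E F k X a b x : short E F k X -> a.+2 <= b -> b <= k ->
  x \in val (X a) -> x \in val (X b) -> False.
Proof.
move=> hs hab hbk ha hb.
have := short_neq hs (leq_trans (leqnSn _) hab) hbk.
have := short_nadj hs hab hbk.
move=> /negP hn hne; apply: hn; apply/ladjP; split => //; by exists x.
Qed.


Lemma nth_walk (E : L) (X : nat -> L) k i : X 0 = E -> i <= k ->
  nth E (E :: mkseq (fun j => X j.+1) k) i = X i.
Proof. by move=> X0; case: i => [|i] //= hi; rewrite nth_mkseq. Qed.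

Lemma walk_rainbow (c : L -> L -> nat) E F k X : walk E F k X ->
  (forall a b, a < b -> b <= k -> X a != X b) ->
  (forall a b, a < b -> b < k -> c (X a) (X a.+1) != c (X b) (X b.+1)) ->
  rainbow_path ladj c E F (mkseq (fun i => X i.+1) k).
Proof.
move=> [X0 Xk Xa] hX hc; split.
- apply/(pathP E) => i; rewrite size_mkseq => hi.
  by rewrite nth_walk // ?nth_mkseq //; [apply: Xa | apply: ltnW].
- by rewrite (last_nth E) size_mkseq nth_walk.
- apply: contraT => /(uniqPn E) [a [b [hab]]].
  rewrite /= size_mkseq ltnS => hb; rewrite !nth_walk //; last by exact: ltnW (leq_trans hab hb).
  by move=> eab; move: (hX a b hab hb); rewrite eab eqxx.
- apply: contraT => /(uniqPn 0) [a [b [hab]]].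
  rewrite size_pairmap size_mkseq => hb.
  rewrite !(nth_pairmap E) ?size_mkseq //; last by apply: ltn_trans hb.
  have ha : a < k by apply: ltn_trans hb.
  rewrite !nth_walk ?(ltnW ha) ?(ltnW hb) // !nth_mkseq //.
  by move=> eab; move: (hc a b hab hb); rewrite eab eqxx.
Qed.

End Basic.

Lemma cyc3 (T : eqType) (a b d : T) : uniq [:: a; b; d] ->
  [/\ next [:: a; b; d] a = b, next [:: a;b;d] b = d & next [:: a;b;d] d = a] /\
  [/\ prev [:: a;b;d] a = d, prev [:: a;b;d] b = a & prev [:: a;b;d] d = b].
Proof.
rewrite /= !inE negb_or andbT => /andP [/andP [nab nad] nbd].
have nba : (b == a) = false by rewrite eq_sym (negbTE nab).
have nda : (d == a) = false by rewrite eq_sym (negbTE nad).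
have ndb : (d == b) = false by rewrite eq_sym (negbTE nbd).
by rewrite /next /prev /= !eqxx ?(negbTE nab) ?(negbTE nad) ?(negbTE nbd) ?nba ?nda ?ndb.
Qed.

Section Tri.
Variables (T : finType) (A : {set T}).
Hypothesis A3 : #|A| = 3.

Lemma enum3 : exists a b d, enum A = [:: a; b; d] /\ uniq [:: a; b; d].
Proof.
have := enum_uniq (mem A); have : size (enum A) = 3 by rewrite -cardE.
case: (enum A) => [|a [|b [|d [|]]]] //= _ u.
by exists a, b, d; split.
Qed.

Definition nxt v := next (enum A) v.
Definition prv v := prev (enum A) v.

Lemma tri_facts v : v \in A ->
  [/\ nxt v \in A, prv v \in A, nxt v != v, prv v != v & nxt v != prv v] /\
  [/\ nxt (nxt v) = prv v, prv (prv v) = nxt v, nxt (prv v) = v & prv (nxt v) = v] /\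
  (forall w, w \in A -> [\/ w = v, w = nxt v | w = prv v]).
Proof.
move=> vA; rewrite /nxt /prv; have [a [b [d [eA u]]]] := enum3.
have memA w : (w \in A) = [|| w == a, w == b | w == d].
  by rewrite -mem_enum eA !inE.
have [[h1 h2 h3] [h4 h5 h6]] := cyc3 u.
move: (u); rewrite /= !inE negb_or andbT => /andP [/andP [nab nad] nbd].
have nba : b != a by rewrite eq_sym.
have nda : d != a by rewrite eq_sym.
have ndb : d != b by rewrite eq_sym.
move: vA; rewrite memA eA => /orP [/eqP ->|/orP [/eqP ->|/eqP ->]]; rewrite ?h1 ?h2 ?h3 ?h4 ?h5 ?h6;
  (split; [by rewrite !memA !eqxx ?orbT | split; [by [] | move=> w; rewrite memA => /orP [/eqP ->|/orP [/eqP ->|/eqP ->]]; by [constructor 1|constructor 2|constructor 3] ]]).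
Qed.

End Tri.

Section Colour.
Variables (T : finType) (e : rel T).
Hypotheses (esym : symmetric e) (eirr : irreflexive e).
Variables (t : nat) (tr : 'I_t -> {set T}).
Hypothesis dt : disjoint_triangles e tr.

Notation L := (line_vertex e).
Notation ladj := (line_adj e).

Lemma tr3 m : #|tr m| = 3. Proof. by case: (dt.1 m). Qed.
Lemma trE m : {in tr m &, forall x y, x != y -> e x y}. Proof. by case: (dt.1 m). Qed.
Lemma tr_uniq m m' v : v \in tr m -> v \in tr m' -> m = m'.
Proof.
move=> h1 h2; apply/eqP; apply: contraT => nm.
by rewrite (disjointFr (dt.2 _ _ nm) h1) in h2.
Qed.

Definition N m v := nxt (tr m) v.
Definition P m v := prv (tr m) v.

Lemma TF m v : v \in tr m ->
  [/\ N m v \in tr m, P m v \in tr m, N m v != v, P m v != v & N m v != P m v] /\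
  [/\ N m (N m v) = P m v, P m (P m v) = N m v, N m (P m v) = v & P m (N m v) = v] /\
  (forall w, w \in tr m -> [\/ w = v, w = N m v | w = P m v]).
Proof. exact: tri_facts (tr3 m) v. Qed.

Definition deg v := #|[set u | e v u]|.
Definition Dset := [set v | 2 <= deg v].
Definition Zset := [set v | [exists m, (v \in tr m) && (index v (enum (tr m)) == 2)]].
Definition Sset := Dset :\: Zset.
Definition kap u := index u (enum Sset).
Definition tri v := [pick m | v \in tr m].

Definition col v (A B : L) : nat :=
  match tri v with
  | Some m =>
      if ((val A == [set v; P m v]) || (val B == [set v; P m v])) &&
         (val A != [set v; N m v]) && (val B != [set v; N m v])
      then kap (nth v (enum (tr m)) 1) else kap (nth v (enum (tr m)) 0)
  | None => kap v
  end.

Definition sh (A B : L) := [pick x in val A :&: val B].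
Definition cc (A B : L) := if sh A B is Some v then col v A B else 0.

Lemma tri_some m v : v \in tr m -> tri v = Some m.
Proof.
move=> h; rewrite /tri; case: pickP => [m' h'|/(_ m)]; last by rewrite h.
by rewrite (tr_uniq h' h).
Qed.

Lemma tri_none v : tri v = None -> forall m, v \notin tr m.
Proof. by move=> h m; apply/negP => /tri_some; rewrite h. Qed.

Lemma deg2 v u w : u != w -> e v u -> e v w -> v \in Dset.
Proof.
move=> nuw hu hw; rewrite inE /deg.
have <- : #|[set u; w]| = 2 by rewrite cards2 nuw.
by apply: subset_leq_card; apply/subsetP => z; rewrite !inE => /orP [] /eqP ->.
Qed.

Lemma tri_D m v : v \in tr m -> v \in Dset.
Proof.
move=> h; have [[h1 h2 h3 h4 h5] _] := TF h.
apply: (deg2 h5); apply: (trE (m := m)) => //; by rewrite eq_sym.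
Qed.

Lemma nth_tr m v i : v \in tr m -> i < 3 -> nth v (enum (tr m)) i \in tr m.
Proof.
by move=> _ hi; rewrite -mem_enum mem_nth // -cardE tr3.
Qed.

Lemma nth_S m v i : v \in tr m -> i < 2 -> nth v (enum (tr m)) i \in Sset.
Proof.
move=> hv hi; have hm : nth v (enum (tr m)) i \in tr m by apply: nth_tr => //; lia.
rewrite /Sset in_setD (tri_D hm) andbT inE; apply/existsP => -[m' /andP [hm' /eqP hi']].
have em := tr_uniq hm hm'; subst m'.
by move: hi'; rewrite index_uniq ?enum_uniq // -?cardE ?tr3 //; lia.
Qed.

Lemma kap_lt u : u \in Sset -> kap u < #|Sset|.
Proof. by move=> h; rewrite /kap cardE index_mem mem_enum. Qed.

Lemma kap_inj u u' : u \in Sset -> u' \in Sset -> kap u = kap u' -> u = u'.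
Proof.
by move=> h h'; apply: (index_inj u); rewrite mem_enum.
Qed.

Definition grp v : {set T} := if tri v is Some m then tr m else [set v].

Lemma col_spec v (A B : L) : A != B -> v \in val A -> v \in val B ->
  exists u, [/\ col v A B = kap u, u \in Sset & u \in grp v].
Proof.
move=> nAB hA hB; rewrite /col /grp; case E: (tri v) => [m|].
  have hv : v \in tr m by move: E; rewrite /tri; case: pickP => // m' h [<-].
  case: ifP => _; [exists (nth v (enum (tr m)) 1) | exists (nth v (enum (tr m)) 0)];
   by rewrite (nth_S hv) ?(nth_tr hv).
exists v; split => //; last by rewrite inE.
have [x [y [hxy nxy eA]]] := edgeP eirr A.
have [x' [y' [hxy' nxy' eB]]] := edgeP eirr B.
have hn := tri_none E; rewrite /Sset in_setD; apply/andP; split.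
  rewrite inE; apply/existsP => -[m /andP [hm _]]; by rewrite (negbTE (hn m)) in hm.
(* v has two distinct neighbours *)
have [a [ha nav]] : exists a, a \in val A /\ a != v.
  move: hA; rewrite eA !inE => /orP [] /eqP ->; [exists y | exists x]; rewrite !inE eqxx ?orbT;
  split => //; by rewrite eq_sym.
have [b [hb nbv]] : exists b, b \in val B /\ b != v.
  move: hB; rewrite eB !inE => /orP [] /eqP ->; [exists y' | exists x']; rewrite !inE eqxx ?orbT;
  split => //; by rewrite eq_sym.
have nab : a != b.
  apply/eqP => eab; subst b.
  by move/eqP: nav; apply; apply: (share1 eirr nAB).
by apply: (deg2 nab); [apply: (edge_adj esym eirr hA ha) | apply: (edge_adj esym eirr hB hb)]; rewrite eq_sym.
Qed.

Lemma col_sym v A B : col v A B = col v B A.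
Proof. by rewrite /col; case: (tri v) => // m; rewrite orbC -andbA [(_ != _) && _]andbC andbA. Qed.

Lemma sh_sym A B : sh A B = sh B A.
Proof. by rewrite /sh setIC. Qed.

Lemma sh_spec (A B : L) x : ladj A B -> x \in val A -> x \in val B -> sh A B = Some x.
Proof.
move=> /(ladjP) [nAB _] hA hB; rewrite /sh; case: pickP => [y|/(_ x)]; last by rewrite inE hA hB.
rewrite inE => /andP [h1 h2]; congr Some; exact: (share1 eirr nAB).
Qed.

Lemma sh_ex (A B : L) : ladj A B -> exists x, [/\ sh A B = Some x, x \in val A & x \in val B].
Proof.
move=> h; have /ladjP [_ [x [h1 h2]]] := h.
by exists x; rewrite (sh_spec h h1 h2).
Qed.

Lemma cc_spec (A B : L) : ladj A B -> exists x, [/\ sh A B = Some x, x \in val A, x \in val B &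
  exists u, [/\ cc A B = kap u, u \in Sset & u \in grp x]].
Proof.
move=> h; have [x [h1 h2 h3]] := sh_ex h; exists x; split => //.
have /ladjP [nAB _] := h; rewrite /cc h1; exact: col_spec.
Qed.

Lemma cc_colouring : edge_colouring ladj #|Sset| cc.
Proof.
move=> A B h; split.
  by have [x [_ _ _ [u [-> hu _]]]] := cc_spec h; apply: kap_lt.
by rewrite /cc sh_sym; case: (sh B A) => // x; rewrite col_sym.
Qed.

Lemma card_S : #|Sset| <= n2 e - t.
Proof.
have ZD : Zset \subset Dset.
  apply/subsetP => v; rewrite inE => /existsP [m /andP [hm _]]; exact: tri_D hm.
rewrite /Sset (cardsDS ZD) /n2 -/Dset.
suff : t <= #|Zset| by lia.
case: (posnP t) => [->|tpos]; first by [].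
have [x0 _] : exists x0, x0 \in tr (Ordinal tpos).
  by apply/set0Pn; rewrite -card_gt0 tr3.
pose g m := nth x0 (enum (tr m)) 2.
have gin m : g m \in tr m by rewrite -mem_enum mem_nth // -cardE tr3.
have ginj : injective g by move=> m m' h; apply: (tr_uniq (gin m)); rewrite h gin.
rewrite -{1}[t]card_ord -(card_imset (mem 'I_t) ginj).
apply: subset_leq_card; apply/subsetP => z /imsetP [m _ ->].
rewrite inE; apply/existsP; exists m; rewrite gin /= /g index_uniq ?enum_uniq // -cardE tr3 //.
Qed.


Lemma tri_in v m : tri v = Some m -> v \in tr m.
Proof. by rewrite /tri; case: pickP => // m' h [<-]. Qed.

Lemma nth_def m v w i : i < 3 -> nth v (enum (tr m)) i = nth w (enum (tr m)) i.
Proof. by move=> hi; apply: set_nth_default; rewrite -cardE tr3. Qed.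

Lemma ab_neq m v : v \in tr m -> kap (nth v (enum (tr m)) 1) != kap (nth v (enum (tr m)) 0).
Proof.
move=> hv; apply/eqP => /(kap_inj (nth_S hv _) (nth_S hv _)) h.
have := congr1 (index^~ (enum (tr m))) (h isT isT).
by rewrite !index_uniq ?enum_uniq // -cardE tr3.
Qed.

Lemma set2_neq (a b c d : T) : a != c -> a != d -> [set a; b] != [set c; d].
Proof.
move=> h1 h2; apply/eqP => h; have : a \in [set c; d] by rewrite -h !inE eqxx.
by rewrite !inE (negbTE h1) (negbTE h2).
Qed.

Lemma local_col m v w (A B C : L) : v \in tr m -> w \in tr m -> v != w ->
  val B = [set v; w] -> col v A B = col w B C ->
  (w = P m v /\ val A = [set v; N m v]) \/ (w = N m v /\ val C = [set w; N m w]).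
Proof.
move=> hv hw nvw eB; rewrite /col (tri_some hv) (tri_some hw).
rewrite -[nth w _ 0](nth_def _ v) // -[nth w _ 1](nth_def _ v) //.
have hab := ab_neq hv.
have [[hN hP hNv hPv hNP] [[hNN hPP hNP' hPN] h3]] := TF hv.
have [ew|ew|ew] := h3 w hw; first by move: nvw; rewrite ew eqxx.
- subst w; rewrite hPN hNN eB eqxx andbF.
  rewrite [[set N m v; v]]setUC eqxx /= set2_neq ?(eq_sym v) //.
  case: eqP => hC /=; first by right.
  by move=> h; move: hab; rewrite h eqxx.
- subst w; rewrite hNP' eB [[set P m v; v]]setUC eqxx andbF orbT /=.
  rewrite [[set v; P m v]]setUC (@set2_neq (P m v) v v (N m v)) ?andbT //; last by rewrite eq_sym.
  case: eqP => hA /=; first by left.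
  by move=> h; move: hab; rewrite h eqxx.
Qed.


Definition tail (A : L) v := [exists m, (val A \subset tr m) && (val A == [set v; N m v])].
Definition tailo (A : L) (o : option T) := if o is Some v then tail A v else false.
Definition mu (X : nat -> L) k := tailo (X 0) (sh (X 0) (X 1)) + tailo (X k) (sh (X k.-1) (X k)).

Lemma tail_tr m (A : L) v : val A \subset tr m -> tail A v = (val A == [set v; N m v]).
Proof.
move=> hs; rewrite /tail; apply/existsP/idP => [[m' /andP [hs' h]]|h]; last by exists m; rewrite hs.
have [x [y [_ _ eA]]] := edgeP eirr A.
have hx : x \in val A by rewrite eA !inE eqxx.
by rewrite (tr_uniq (subsetP hs x hx) (subsetP hs' x hx)).
Qed.

Lemma sub2 m a b : a \in tr m -> b \in tr m -> [set a; b] \subset tr m.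
Proof. by move=> ha hb; apply/subsetP => z; rewrite !inE => /orP [] /eqP ->. Qed.

Lemma minP (Q : nat -> Prop) : (exists n, Q n) -> exists n, Q n /\ forall m, Q m -> n <= m.
Proof.
move=> [n hn]; apply: NNPP => H.
have : forall n m, m <= n -> ~ Q m.
  elim=> [|n' IH] m hm hQ.
    apply: H; exists m; split => // m' _; lia.
  case: (leqP m n') => h; first exact: IH h hQ.
  apply: H; exists m; split => // m' hm'; apply: contraT; rewrite -ltnNge => hlt.
  by case: (IH m'); [lia | ].
by move/(_ n n (leqnn n)).
Qed.

Lemma rainbow_walk (conn : connected_graph e) (E F : L) : exists k X, walk E F k X /\
  (forall a b, a < b -> b <= k -> X a != X b) /\
  (forall a b, a < b -> b < k -> cc (X a) (X a.+1) != cc (X b) (X b.+1)).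
Proof.
pose Q n := exists k X, walk E F k X /\ 3 * k + mu X k = n.
have [n [[k [X [hw hn]]] hmin]] : exists n, Q n /\ forall m, Q m -> n <= m.
  apply: minP; have [k [X hw]] := walk_exists eirr conn E F.
  by exists (3 * k + mu X k), k, X.
have mu2 Y j : mu Y j <= 2 by rewrite /mu; case: tailo; case: tailo.
have hs : short E F k X.
  split => // k' X' hw'; have := hmin _ (ex_intro _ k' (ex_intro _ X' (conj hw' erefl))).
  have := mu2 X' k'; lia.
have hmu X' : walk E F k X' -> mu X k <= mu X' k.
  by move=> hw'; have := hmin _ (ex_intro _ k (ex_intro _ X' (conj hw' erefl))); lia.
have [X0 Xk Xa] := hw.
have hdist i j x y : i < j -> j < k -> x \in val (X i) -> y \in val (X j.+1) -> x != y.
  move=> hij hjk hx hy; apply/eqP => exy; subst y.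
  by apply: (short_disj hs (a := i) (b := j.+1) _ _ hx hy).
have hfar i j x y m : i.+2 <= j -> j < k -> x \in val (X i) -> y \in val (X j.+1) ->
    x \in tr m -> y \in tr m -> False.
  move=> hij hjk hx hy hxm hym.
  have nxy : x != y by apply: (hdist i j) => //; lia.
  pose B := mkL (trE hxm hym nxy).
  have hxB : x \in val B by rewrite val_mkL !inE eqxx.
  have hyB : y \in val B by rewrite val_mkL !inE eqxx orbT.
  apply: (short_nadj2 hs (a := i) (b := j.+1) (B := B)) => //.
  - apply/ladjP; split; last by exists x.
    apply/eqP => eXB; apply: (short_disj hs (a := i) (b := j.+1) (x := y)) => //; first lia.
    by rewrite eXB.
  - apply/ladjP; split; last by exists y.
    apply/eqP => eXB; apply: (short_disj hs (a := i) (b := j.+1) (x := x)) => //; first lia.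
    by rewrite -eXB.
exists k, X; split => //; split; first by move=> a b hab hbk; exact: short_neq hs hab hbk.
move=> a b hab hbk; apply/negP => /eqP hc.
have [x [sx hx1 hx2 [u [cu hu gu]]]] := cc_spec (Xa a (ltn_trans hab hbk)).
have [y [sy hy1 hy2 [u' [cu' hu' gu']]]] := cc_spec (Xa b hbk).
have uu : u = u' by apply: kap_inj => //; rewrite -cu -cu'.
subst u'.
have nxy : x != y := hdist a b x y hab hbk hx1 hy2.
move: gu gu'; rewrite /grp; case Tx: (tri x) => [m|]; case Ty: (tri y) => [m'|].
- move=> hum hum'; have em := tr_uniq hum' hum; subst m'.
  have hxm := tri_in Tx; have hym := tri_in Ty.
  case: (leqP a.+2 b) => hab2; first by apply: (hfar a b x y m).
  have eb : b = a.+1 by apply/anti_leq; rewrite -ltnS hab2 hab.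
  subst b.
  have eB : val (X a.+1) = [set x; y] := edge2 eirr hx2 hy1 nxy.
  have hc' : col x (X a) (X a.+1) = col y (X a.+1) (X a.+2) by move: hc; rewrite /cc sx sy.
  have [[hN hP hNv hPv hNP] [[hNN hPP hNP' hPN] h3]] := TF hxm.
  case: (local_col hxm hym nxy eB hc') => [[ey eA]|[ey eC]].
  + case: (posnP a) => [a0|apos]; last first.
      have ea : a = a.-1.+1 by rewrite prednK.
      have ha1 : a.-1 < k by apply: leq_ltn_trans (leq_pred a) (ltn_trans hab hbk).
      have [z [_ hz1 hz2]] := sh_ex (Xa a.-1 ha1).
      have nzx : z != x.
        by apply: (hdist a.-1 a) => //; [rewrite ltn_predL | apply: ltn_trans hab hbk].
      have hzm : z \in tr m.
        by move: hz2; rewrite -ea eA !inE (negbTE nzx) /= => /eqP ->.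
      by apply: (hfar a.-1 a.+1 z y m) => //; rewrite ea.
    subst a.
    have hNy : N m x != y by rewrite ey.
    pose B' := mkL (trE hN hym hNy).
    pose X' n := if n == 1 then B' else X n.
    have hw' : walk E F k X'.
      split; first by rewrite /X' /= X0.
        by rewrite /X' ifN ?Xk //; apply/eqP => k1; rewrite k1 in hbk.
      move=> [|[|n0]] hn0; rewrite /X' /=.
      - apply/ladjP; split; last by exists (N m x); rewrite eA val_mkL !inE !eqxx ?orbT.
        apply/eqP => eXB; have : x \in val B' by rewrite -eXB.
        by rewrite val_mkL !inE eq_sym (negbTE hNv) (negbTE nxy).
      - apply/ladjP; split; last by exists y; rewrite val_mkL !inE eqxx ?orbT.
        apply/eqP => eXB; apply: (short_disj hs (a := 0) (b := 2) (x := N m x)) => //.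
          by rewrite eA !inE eqxx orbT.
        by rewrite -eXB val_mkL !inE eqxx.
      - exact: Xa.
    have hk1 : (k == 1) = false by apply/negbTE; rewrite neq_ltn hbk orbT.
    have [_ _ Xa'] := hw'.
    have hX0 : val (X 0) \subset tr m by rewrite eA sub2.
    have e1 : sh (X 0) B' = Some (N m x).
      apply: (sh_spec (Xa' 0 (ltn_trans hab hbk))); first by rewrite eA !inE eqxx orbT.
      by rewrite /B' val_mkL !inE eqxx.
    have e2 : sh (if k.-1 == 1 then B' else X k.-1) (X k) = sh (X k.-1) (X k).
      case: eqP => // k1; have k2 : k = 2 by rewrite -[k]prednK ?k1 // (ltn_trans hab hbk).
      rewrite k2 /= sy; apply: (sh_spec (Xa' 1 _)); rewrite ?k2 //.
        by rewrite /B' val_mkL !inE eqxx orbT.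
    have := hmu X' hw'; rewrite /mu /X' /= sx hk1 e1 e2 /= (tail_tr x hX0) (tail_tr (N m x) hX0).
    rewrite eA eqxx hNN (negbTE (@set2_neq x (N m x) (N m x) (P m x) _ _)) ?leq_add2r //; by rewrite eq_sym.
  + subst y; rewrite hNN in eC.
    case: (ltnP a.+2 k) => hk.
      have [z [_ hz1 hz2]] := sh_ex (Xa a.+2 hk).
      have nzy : N m x != z by apply: (hdist a.+1 a.+2).
      have hzm : z \in tr m.
        by move: hz1; rewrite eC !inE eq_sym (negbTE nzy) /= => /eqP ->.
      by apply: (hfar a a.+2 x z m).
    have ek : k = a.+2 by apply/anti_leq; rewrite hk hbk.
    subst k.
    have ea2 : (a.+2 == a.+1) = false by rewrite eqSS gtn_eqF.
    have hxP : x != P m x by rewrite eq_sym.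
    pose B' := mkL (trE hxm hP hxP).
    pose X' n := if n == a.+1 then B' else X n.
    have hw' : walk E F a.+2 X'.
      split; first by rewrite /X' /= X0.
        by rewrite /X' ea2 Xk.
      move=> n0 hn0; rewrite /X'.
      case: (eqVneq n0 a.+1) => [->|hn1].
        rewrite ea2; apply/ladjP; split; last by exists (P m x); rewrite eC /B' val_mkL !inE eqxx ?orbT.
        apply/eqP => eXB; have : x \in val (X a.+2) by rewrite -eXB /B' val_mkL !inE eqxx.
        by rewrite eC !inE eq_sym (negbTE hNv) (negbTE hxP).
      case: (eqVneq n0.+1 a.+1) => [[->]|hn2]; last exact: Xa.
      apply/ladjP; split; last by exists x; rewrite /B' val_mkL !inE eqxx.
      apply/eqP => eXB; apply: (short_disj hs (a := a) (b := a.+2) (x := P m x)) => //.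
        by rewrite eXB /B' val_mkL !inE eqxx orbT.
      by rewrite eC !inE eqxx orbT.
    have [_ _ Xa'] := hw'.
    have hXk : val (X a.+2) \subset tr m by rewrite eC sub2.
    have e1 : sh B' (X a.+2) = Some (P m x).
      have := Xa' a.+1 (ltnSn _); rewrite /X' eqxx ea2 => hadj.
      apply: (sh_spec hadj); first by rewrite /B' val_mkL !inE eqxx orbT.
      by rewrite eC !inE eqxx orbT.
    have e2 : sh (X' 0) (X' 1) = sh (X 0) (X 1).
      rewrite /X'; case: (eqVneq 0 a.+1) => // _.
      case: (eqVneq 1 a.+1) => // -[a0]; subst a.
      rewrite /= sx; apply: (sh_spec (Xa' 0 isT)); rewrite /X' /= //.
      by rewrite !inE eqxx.
    have X'0 : X' 0 = X 0 by [].
    have X'k : X' a.+2 = X a.+2 by rewrite /X' ea2.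
    have X'k1 : X' a.+1 = B' by rewrite /X' eqxx.
    have := hmu X' hw'; rewrite /mu /= e2 X'0 X'k X'k1 e1 sy /= (tail_tr (N m x) hXk) (tail_tr (P m x) hXk).
    rewrite eC hNN eqxx hNP' (negbTE (@set2_neq (N m x) (P m x) (P m x) x _ _)) ?leq_add2l //; by rewrite eq_sym.
- move=> hum; rewrite inE => /eqP eu; rewrite eu in hum.
  by rewrite (tri_some hum) in Ty.
- rewrite inE => /eqP eu hum; rewrite eu in hum.
  by rewrite (tri_some hum) in Tx.
- rewrite !inE => /eqP eu /eqP eu'; by rewrite -eu -eu' eqxx in nxy.
Qed.

Lemma rc_bound (conn : connected_graph e) : rc_with ladj (n2 e - t).
Proof.
exists cc; split.
  move=> A B h; have [h1 h2] := cc_colouring h; split => //.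
  exact: leq_trans h1 card_S.
move=> E F; have [k [X [hw [hX hc]]]] := rainbow_walk conn E F.
by exists (mkseq (fun i => X i.+1) k); apply: walk_rainbow.
Qed.

End Colour.

Definition gnat (a b : nat) := (a.+1 == b) || ((a %% 3 == 1) && (b == a + 2)).
Definition genat (a b : nat) := gnat a b || gnat b a.
Definition dd (v : nat) := v - v %/ 3.

Lemma genat_d a b : genat a b -> dd a <= dd b + 1 /\ dd b <= dd a + 1.
Proof. rewrite /genat /gnat /dd => /orP [] /orP [/eqP <-|/andP [/eqP h /eqP ->]]; lia. Qed.

Section Ex.
Variable t : nat.
Definition nn := (3 * t).+2.
Definition ex_e : rel 'I_nn := fun x y => genat x y.

Lemma ex_sym : symmetric ex_e.
Proof. by move=> x y; rewrite /ex_e /genat orbC. Qed.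

Lemma ex_irr : irreflexive ex_e.
Proof. move=> x; rewrite /ex_e /genat /gnat; apply/negP; lia. Qed.

Lemma ex_conn : connected_graph ex_e.
Proof.
have h0 (x : 'I_nn) : connect ex_e ord0 x.
  case: x => x hx; elim: x hx => [|x IH] hx.
    by have -> : Ordinal hx = ord0 by apply: val_inj.
  have hx' : x < nn by lia.
  apply: connect_trans (IH hx') _; apply: connect1.
  by rewrite /ex_e /genat /gnat /= eqxx.
move=> x y; apply: connect_trans (h0 y).
by rewrite (sym_connect_sym ex_sym).
Qed.


Lemma val_inord_nn k : k < (3 * t).+2 -> val (@inord (3 * t).+1 k) = k.
Proof. exact: inordK. Qed.

Definition ex_tr (i : 'I_t) : {set 'I_nn} :=
  [set @inord (3 * t).+1 (3 * i + 1); inord (3 * i + 2); inord (3 * i + 3)].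

Lemma mem_tr i (x : 'I_nn) : (x \in ex_tr i) = (3 * i < x <= 3 * i + 3).
Proof.
have hi := ltn_ord i.
rewrite !inE -!val_eqE !val_inord_nn /nn. all: simpl; lia.
Qed.

Lemma ex_dt : disjoint_triangles ex_e ex_tr.
Proof.
split.
  move=> i; have hi := ltn_ord i; split.
    rewrite /ex_tr setUC cardsU1 cards2 !inE -!val_eqE !val_inord_nn /nn; simpl; lia.
  move=> x y; rewrite !mem_tr /ex_e /genat /gnat => hx hy; rewrite -(inj_eq val_inj) /= => hxy; lia.
move=> i j; rewrite -(inj_eq val_inj) /= => hij.
rewrite -setI_eq0; apply/eqP/setP => x; rewrite in_setI !mem_tr inE; lia.
Qed.

Lemma deg_char (v : 'I_nn) : (2 <= #|[set u | ex_e v u]|) = (0 < v < (3 * t).+1).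
Proof.
have hv : v < (3 * t).+2 := ltn_ord v.
case h: (0 < v < (3 * t).+1); [move: h => /andP [ha hb] | move/negbT: h => h].
  have h1 : v.-1 < (3 * t).+2 by lia.
  have h2 : v.+1 < (3 * t).+2 by lia.
  have <- : #|[set inord v.-1; @inord (3 * t).+1 v.+1]| = 2.
    by rewrite cards2 -(inj_eq val_inj) !val_inord_nn //=; lia.
  apply: subset_leq_card; apply/subsetP => u; rewrite !inE => /orP [] /eqP ->;
    rewrite /ex_e /genat /gnat val_inord_nn //; lia.
have [w hw] : exists w : 'I_nn, forall u, ex_e v u -> u = w.
  case: (posnP v) => v0.
    exists (inord 1) => u; rewrite /ex_e /genat /gnat v0 => hu; apply: val_inj.
    rewrite val_inord_nn /=; lia.
  exists (inord (3 * t)) => u; rewrite /ex_e /genat /gnat => hu; apply: val_inj.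
  have hu' : u < (3 * t).+2 := ltn_ord u.
  rewrite val_inord_nn /=; lia.
apply/negbTE; rewrite -ltnNge ltnS.
rewrite -(cards1 w); apply: subset_leq_card; apply/subsetP => u; rewrite !inE => /hw ->.
by rewrite eqxx.
Qed.

Lemma ex_n2 : n2 ex_e = 3 * t.
Proof.
rewrite /n2.
have -> : [set v : 'I_nn | 2 <= #|[set u | ex_e v u]|] =
          [set @inord (3 * t).+1 (val j).+1 | j in 'I_(3 * t)].
  apply/setP => v; rewrite inE deg_char; apply/idP/imsetP => [h|[j _ ->]].
    have hv : v.-1 < 3 * t by lia.
    exists (Ordinal hv) => //; apply: val_inj; rewrite val_inord_nn /=; lia.
  have hj := ltn_ord j; rewrite val_inord_nn; simpl; lia.
have inj : injective (fun j : 'I_(3 * t) => @inord (3 * t).+1 (val j).+1).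
  move=> j j' /(congr1 val); rewrite !val_inord_nn; last 2 first.
  - by have := ltn_ord j'; simpl; lia.
  - by have := ltn_ord j; simpl; lia.
  by move=> [] /val_inj.
by rewrite (card_imset _ inj) card_ord.
Qed.


Notation LL := (line_vertex ex_e).

Definition phi (A : LL) := \sum_(x in val A) dd x.

Lemma phi2 (A : LL) z w : z != w -> val A = [set z; w] -> phi A = dd z + dd w.
Proof.
move=> nzw eA; rewrite /phi eA (@big_setU1 _ _ _ _ z [set w] dd); last by rewrite in_set1.
by rewrite big_set1.
Qed.

Lemma other (A : LL) z : z \in val A -> exists w, w != z /\ val A = [set z; w].
Proof.
have [x [y [_ nxy eA]]] := edgeP ex_irr A.
rewrite eA !inE => /orP [] /eqP ->; [exists y | exists x]; split => //.
- by rewrite eq_sym.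
- by rewrite setUC.
Qed.

Lemma phi_adj (A B : LL) : line_adj ex_e A B -> phi B <= phi A + 2.
Proof.
move=> /ladjP [_ [z [hA hB]]].
have [a [naz eA]] := other hA; have [b [nbz eB]] := other hB.
have ha : a \in val A by rewrite eA !inE eqxx orbT.
have hb : b \in val B by rewrite eB !inE eqxx orbT.
have hza : z != a by rewrite eq_sym.
have hzb : z != b by rewrite eq_sym.
have := genat_d (edge_adj ex_sym ex_irr hA ha hza).
have := genat_d (edge_adj ex_sym ex_irr hB hb hzb).
rewrite (phi2 hza eA) (phi2 hzb eB); lia.
Qed.

Lemma phi_path (x : LL) p : path (line_adj ex_e) x p -> phi (last x p) <= phi x + 2 * size p.
Proof.
elim: p x => [|y p IH] x /=; first by rewrite addn0.
move=> /andP [hxy hp]; have := IH y hp; have := phi_adj hxy => h1 h2; rewrite mulnS addnA; apply: leq_trans h2 _; by rewrite leq_add2r.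
Qed.

Lemma pairmap_lt (c : LL -> LL -> nat) K (x : LL) p :
  edge_colouring (line_adj ex_e) K c -> path (line_adj ex_e) x p ->
  forall n, n \in pairmap c x p -> n < K.
Proof.
move=> hc; elim: p x => [|y p IH] x //= /andP [hxy hp] n.
rewrite inE => /orP [/eqP ->|]; [exact: (hc _ _ hxy).1 | exact: IH].
Qed.

Lemma lower K : rc_with (line_adj ex_e) K -> 2 * t <= K.
Proof.
move=> [c [hc hr]].
have h01 : ex_e (inord 0) (inord 1) by rewrite /ex_e /genat /gnat !val_inord_nn.
have hk : ex_e (inord (3 * t)) (inord (3 * t).+1) by rewrite /ex_e /genat /gnat !val_inord_nn ?eqxx.
have [p [hp hl hu hpm]] := hr (mkL h01) (mkL hk).
have p0 : phi (mkL h01) = dd 0 + dd 1.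
  rewrite (phi2 (A := mkL h01) (z := inord 0) (w := inord 1)) ?val_inord_nn //.
  by rewrite -(inj_eq val_inj) /= !val_inord_nn.
have pk : phi (mkL hk) = dd (3 * t) + dd (3 * t).+1.
  rewrite (phi2 (A := mkL hk) (z := inord (3 * t)) (w := inord (3 * t).+1)) ?val_inord_nn //.
  by rewrite -(inj_eq val_inj) /= !val_inord_nn //; lia.
have := phi_path hp; rewrite hl p0 pk /dd => hsz.
have : size (pairmap c (mkL h01) p) <= size (iota 0 K).
  by apply: uniq_leq_size => // n /(pairmap_lt hc hp); rewrite mem_iota.
rewrite size_pairmap size_iota; lia.
Qed.

End Ex.

Lemma rc_withbE (V : finType) (adj : rel V) k : rc_withb adj k = true <-> rc_with adj k.
Proof. by rewrite /rc_withb; case: excluded_middle_informative. Qed.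

Lemma rc_le (V : finType) (adj : rel V) k : rc_with adj k -> rc adj <= k.
Proof.
move=> h; rewrite /rc; case: excluded_middle_informative => [H|_] //.
by case: (ex_minnP H) => n _; apply; apply/rc_withbE.
Qed.

Lemma rc_ge (V : finType) (adj : rel V) k : (exists K, rc_with adj K) ->
  (forall K, rc_with adj K -> k <= K) -> k <= rc adj.
Proof.
move=> [K0 h0] hlow; rewrite /rc; case: excluded_middle_informative => [H|H].
  by case: (ex_minnP H) => n /rc_withbE hn _; apply: hlow.
by exfalso; apply: H; exists K0; apply/rc_withbE.
Qed.

Theorem corollary3p2 :
  (forall (T : finType) (e : rel T) (t : nat) (tr : 'I_t -> {set T}),
      symmetric e -> irreflexive e -> connected_graph e ->
      disjoint_triangles e tr ->
      rc (line_adj e) <= n2 e - t)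
  /\
  (forall t : nat, 0 < t ->
      exists (T : finType) (e : rel T) (tr : 'I_t -> {set T}),
        [/\ symmetric e, irreflexive e, connected_graph e,
            disjoint_triangles e tr &
            rc (line_adj e) = n2 e - t]).
Proof.
split.
  move=> T e t tr hs hi hc hdt; apply: rc_le; exact: (rc_bound hs hi hdt hc).
move=> t tpos; exists 'I_(nn t), (@ex_e t), (@ex_tr t); split.
- exact: ex_sym.
- exact: ex_irr.
- exact: ex_conn.
- exact: ex_dt.
have hb := rc_bound (@ex_sym t) (@ex_irr t) (@ex_dt t) (@ex_conn t).
rewrite ex_n2 in hb *.
apply/anti_leq; rewrite rc_le //=.
have -> : 3 * t - t = 2 * t by lia.
apply: rc_ge; first by exists (3 * t - t).
exact: lower.
Qed.
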